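(* For any set $\mathscr X$ disjoint from $\tau$, the $\bar\tau$-algebra $\mathcal N_{\bar\tau}(\mathscr X)$ is an infinitary clone $\tau$-algebra, and it is the free infinitary clone $\tau$-algebra over the set $\dot{\mathscr X}=\{\dot x: x\in\mathscr X\}$ of generators: for every infinitary clone $\tau$-algebra $\mathcal C$ and every function $\alpha:\dot{\mathscr X}\to C$ there is a unique homomorphism $\mathcal N_{\bar\tau}(\mathscr X)\to\mathcal C$ extending $\alpha$. In particular, $\mathcal N_{\bar\tau}=\mathcal N_{\bar\tau}(\emptyset)$ is initial among infinitary clone $\tau$-algebras.
   Context: $\tau$ is a set of $\omega$-ary operation symbols disjoint from $\{q\}\cup\{e_i:i\in\omega\}$. $\bar\tau$ is the type with nullary $e_i$ ($i\in\omega$), nullary $f$ for each $f\in\tau$, and $\omega$-ary $q$. An infinitary clone $\tau$-algebra is a $\bar\tau$-algebra satisfying (N1) $q(e_i,x_0,x_1,\dots)=x_i$; (N2) $q(x,e_0,e_1,\dots)=x$; (N3) $q(q(x,y_0,y_1,\dots),\boldsymbol z)=q(x,q(y_0,\boldsymbol z),q(y_1,\boldsymbol z),\dots)$. Metaterms: $N_{\bar\tau}(\mathscr X)$ is the smallest set containing the symbols $e_0,e_1,\dots$ and containing $w(t_0,t_1,\dots)$ whenever $w\in\tau\cup\mathscr X$ and $t_0,t_1,\dots\in N_{\bar\tau}(\mathscr X)$ (well-founded countably branching terms, every symbol of $\tau\cup\mathscr X$ being treated as $\omega$-ary). $\mathcal N_{\bar\tau}(\mathscr X)$ is the $\bar\tau$-algebra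 on $N_{\bar\tau}(\mathscr X)$ with $e_i\mapsto e_i$, $f\mapsto f(e_0,e_1,\dots)$ for $f\in\tau$, and $q$ defined by recursion on the first argument: $q(e_i,t_0,t_1,\dots)=t_i$ and $q(w(t_0,t_1,\dots),\boldsymbol u)=w(q(t_0,\boldsymbol u),q(t_1,\boldsymbol u),\dots)$ for $w\in\tau\cup\mathscr X$. For $x\in\mathscr X$, $\dot x=x(e_0,e_1,\dots)$. *)

(* Defs.v *)
Set Implicit Arguments.

Record bar_alg (tau : Type) : Type := BarAlg {
  carrier :> Type;
  ae : nat -> carrier;
  af : tau -> carrier;
  aq : carrier -> (nat -> carrier) -> carrier
}.
Arguments ae {tau} _ _.
Arguments af {tau} _ _.
Arguments aq {tau} _ _ _.

(* Infinitary clone tau-algebra: axioms (N1)-(N3). *)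
Definition is_clone_alg (tau : Type) (A : bar_alg tau) : Prop :=
  (forall (i : nat) (xs : nat -> A), aq A (ae A i) xs = xs i) /\
  (forall x : A, aq A x (ae A) = x) /\
  (forall (x : A) (ys zs : nat -> A),
      aq A (aq A x ys) zs = aq A x (fun i => aq A (ys i) zs)).

Definition is_hom {tau : Type} {A B : bar_alg tau} (h : A -> B) : Prop :=
  (forall i, h (ae A i) = ae B i) /\
  (forall f, h (af A f) = af B f) /\
  (forall (x : A) (ys : nat -> A), h (aq A x ys) = aq B (h x) (fun i => h (ys i))).

(* Leaves are the symbols e_i; internal nodes are labelled by a symbol of
   tau \cup X (represented as the disjoint sum tau + X) and are omega-ary. *)
Inductive metaterm (tau X : Type) : Type :=
| MVar : nat -> metaterm tau X
| MNode : (tau + X) -> (nat -> metaterm tau X) -> metaterm tau X.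
Arguments MVar {tau X} i.
Arguments MNode {tau X} w ts.

Fixpoint mq (tau X : Type) (t : metaterm tau X) (u : nat -> metaterm tau X)
  : metaterm tau X :=
  match t with
  | MVar i => u i
  | MNode w ts => MNode w (fun n => mq (ts n) u)
  end.

Definition N_alg (tau X : Type) : bar_alg tau :=
  @BarAlg tau (metaterm tau X) (fun i => MVar i)
    (fun f => MNode (inl f) (fun i => MVar i)) (@mq tau X).

Definition mdot (tau X : Type) (x : X) : metaterm tau X :=
  MNode (inr x) (fun i => MVar i).

Definition dotX (tau X : Type) : Type :=
  { t : metaterm tau X | exists x : X, t = mdot tau x }.

(* Main.v *)
Require Import Defs.
From Stdlib Require Import FunctionalExtensionality ProofIrrelevance.

Section S.
Variables (tau X : Type) (C : bar_alg tau) (a : X -> C).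

Fixpoint hext (t : metaterm tau X) : C :=
  match t with
  | MVar i => ae C i
  | MNode (inl f) ts => aq C (af C f) (fun n => hext (ts n))
  | MNode (inr x) ts => aq C (a x) (fun n => hext (ts n))
  end.

Lemma hext_q (HC : is_clone_alg C) (t : metaterm tau X) u :
  hext (mq t u) = aq C (hext t) (fun n => hext (u n)).
Proof.
  destruct HC as [N1 [N2 N3]].
  induction t as [i|[f|x] ts IH]; simpl.
  - now rewrite N1.
  - rewrite N3. f_equal. apply functional_extensionality; auto.
  - rewrite N3. f_equal. apply functional_extensionality; auto.
Qed.
End S.

Lemma mq_id tau X (t : metaterm tau X) : mq t MVar = t.
Proof.
  induction t as [i|w ts IH]; simpl; auto.
  f_equal; apply functional_extensionality; auto.
Qed.

Lemma mq_assoc tau X (t : metaterm tau X) ys zs :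
  mq (mq t ys) zs = mq t (fun i => mq (ys i) zs).
Proof.
  induction t as [i|w ts IH]; simpl; auto.
  f_equal; apply functional_extensionality; auto.
Qed.

Theorem proposition4p3 :
  forall (tau X : Type),
    (* N_taubar(X) is an infinitary clone tau-algebra *)
    is_clone_alg (N_alg tau X) /\
    (* freeness over X-dot *)
    (forall (C : bar_alg tau), is_clone_alg C ->
       forall alpha : dotX tau X -> C,
         exists h : N_alg tau X -> C,
           is_hom h /\
           (forall g : dotX tau X, h (proj1_sig g) = alpha g) /\
           (forall h' : N_alg tau X -> C,
              is_hom h' -> (forall g : dotX tau X, h' (proj1_sig g) = alpha g) ->
              forall t, h' t = h t)) /\
    (* in particular N_taubar = N_taubar(empty) is initial *)
    (forall (C : bar_alg tau), is_clone_alg C ->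
       exists h : N_alg tau Empty_set -> C,
         is_hom h /\
         (forall h' : N_alg tau Empty_set -> C, is_hom h' -> forall t, h' t = h t)).
Proof.
  assert (Free : forall (tau X : Type) (C : bar_alg tau), is_clone_alg C ->
       forall alpha : dotX tau X -> C,
         exists h : N_alg tau X -> C,
           is_hom h /\
           (forall g : dotX tau X, h (proj1_sig g) = alpha g) /\
           (forall h' : N_alg tau X -> C,
              is_hom h' -> (forall g : dotX tau X, h' (proj1_sig g) = alpha g) ->
              forall t, h' t = h t)).
  { intros tau X C HC alpha.
    set (a := fun x : X => alpha (exist _ (mdot tau x) (ex_intro _ x eq_refl))).
    exists (@hext tau X C a).
    pose proof HC as [N1 [N2 N3]].
    split; [|split].
    - split; [|split].
      + reflexivity.
      + intros f; simpl. apply N2.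
      + intros x ys. apply (@hext_q tau X C a HC).
    - intros [t p]; simpl. destruct p as [x Hx]. subst t. simpl.
      rewrite N2. unfold a. f_equal.
    - intros h' [H1 [H2 H3]] Hg t.
      induction t as [i|[f|x] ts IH].
      + apply H1.
      + simpl. rewrite <- H2. change (MNode (inl f) ts) with (aq (N_alg tau X) (af (N_alg tau X) f) ts). rewrite H3.
        f_equal. apply functional_extensionality; auto.
      + simpl. change (MNode (inr x) ts) with (aq (N_alg tau X) (mdot tau x) ts). rewrite H3.
        pose proof (Hg (exist _ (mdot tau x) (ex_intro _ x eq_refl))) as E; simpl in E; rewrite E.
        f_equal. apply functional_extensionality; auto. }
  intros tau X. split; [|split].
  - split; [|split].
    + reflexivity.
    + intros x. apply mq_id.
    + intros x ys zs. apply mq_assoc.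
  - apply Free.
  - intros C HC.
    set (alpha := fun g : dotX tau Empty_set =>
      match proj1_sig g with
      | MNode (inr x) _ => match x with end
      | _ => ae C 0 end).
    destruct (Free tau Empty_set C HC alpha) as [h [Hh [_ Hu]]].
    exists h. split; auto.
    intros h' Hh'. apply Hu; auto.
    intros [t Ht]. exfalso. destruct Ht as [x _]. destruct x.
Qed.
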